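(* Let $A\subset C(X)$ be a uniform algebra, let $\theta : A\to M_n(\mathbb{C})$ be a continuous unital homomorphism, and let $\alpha : A\to A$ be a unital antilinear contraction. Suppose that $$\theta_\alpha(f):=\tfrac12\bigl(\theta(f)+\theta(\alpha(f))^*\bigr)$$ satisfies $\|\theta_\alpha\|\le 1$. If $p\in A$ is a self-adjoint projection, meaning $p^2=p$ and $\overline{p}=p$, then $\theta(p)$ is a self-adjoint projection in $M_n(\mathbb{C})$.
   Context: A uniform algebra is a norm-closed subalgebra of $C(X)$, for $X$ a compact Hausdorff space, containing the constants, with the supremum norm. A map $\alpha$ is antilinear if $\alpha(\lambda f+g)=\overline\lambda\alpha(f)+\alpha(g)$. It is a contraction if $\|\alpha(f)\|\le\|f\|$, and it is unital if $\alpha(1)=1$. $M_n(\mathbb{C})$ carries the operator norm. *)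

(* Defs.v *)
From HB Require Import structures.
From mathcomp Require Import all_boot all_order all_algebra.
From mathcomp Require Import all_classical all_reals all_analysis.
From mathcomp Require Export complex.
Export numFieldTopology.Exports.
Import Order.TTheory GRing.Theory Num.Theory.
Set Implicit Arguments. Unset Strict Implicit. Unset Printing Implicit Defensive.
Local Open Scope ring_scope.
Local Open Scope classical_set_scope.

Section Defs.
Variable R : realType.
Local Notation C := R[i].

Definition cmod (z : C) : R := complex.Re `|z|.

Definition supnorm (X : Type) (f : X -> C) : R := sup (range (fun x => cmod (f x))).

Definition vnorm n (v : 'cV[C]_n) : R := Num.sqrt (\sum_(i < n) cmod (v i ord0) ^+ 2).

Definition opnorm n (M : 'M[C]_n) : R :=
  sup [set vnorm (M *m v) | v in [set v : 'cV[C]_n | vnorm v <= 1]].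

Definition adjmx n (M : 'M[C]_n) : 'M[C]_n := map_mx Num.conj M^T.

Definition CX (X : topologicalType) : set (X -> C) := [set f | continuous (f : X -> Num.ClosedField.sort (C : numClosedFieldType))].

Definition uniform_algebra (X : topologicalType) (A : set (X -> C)) : Prop :=
  A `<=` @CX X /\
  [/\ (forall c : C, A (fun _ => c)),
      (forall f g, A f -> A g -> A (fun x => f x + g x)),
      (forall (c : C) f, A f -> A (fun x => c * f x)),
      (forall f g, A f -> A g -> A (fun x => f x * g x)) &
      (forall g, @CX X g ->
         (forall e : R, 0 < e -> exists2 f, A f & supnorm (fun x => f x - g x) < e) ->
         A g)].

Definition cont_unital_hom (X : topologicalType) (A : set (X -> C)) n
    (theta : (X -> C) -> 'M[C]_n) : Prop :=
  [/\ (forall (c : C) f g, A f -> A g ->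
          theta (fun x => c * f x + g x) = c *: theta f + theta g),
      (forall f g, A f -> A g -> theta (fun x => f x * g x) = theta f *m theta g),
      theta (fun _ => 1) = 1%:M &
      (forall f, A f -> forall e : R, 0 < e -> exists2 d : R, 0 < d &
          forall g, A g -> supnorm (fun x => g x - f x) < d ->
            opnorm (theta g - theta f) < e)].

Definition unital_antilinear_contraction (X : topologicalType) (A : set (X -> C))
    (alpha : (X -> C) -> (X -> C)) : Prop :=
  [/\ (forall f, A f -> A (alpha f)),
      (forall (c : C) f g, A f -> A g ->
          alpha (fun x => c * f x + g x) = (fun x => Num.conj c * alpha f x + alpha g x)),
      alpha (fun _ => 1) = (fun _ => 1) &
      (forall f, A f -> supnorm (alpha f) <= supnorm f)].

Definition theta_alpha (X : Type) n (theta : (X -> C) -> 'M[C]_n)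
    (alpha : (X -> C) -> (X -> C)) (f : X -> C) : 'M[C]_n :=
  (2%:R)^-1 *: (theta f + adjmx (theta (alpha f))).

End Defs.

(* Main.v *)
Require Import Defs.
From mathcomp Require Import all_boot all_order all_algebra.
From mathcomp Require Import all_classical all_reals all_analysis.
From mathcomp Require Import complex.
From mathcomp Require Import spectral sesquilinear ring lra.
Import Order.TTheory GRing.Theory Num.Theory.
Set Implicit Arguments. Unset Strict Implicit. Unset Printing Implicit Defensive.
Local Open Scope ring_scope.

Section ML.
Variable C : numClosedFieldType.

Definition ad m n (M : 'M[C]_(m,n)) : 'M[C]_(n,m) := map_mx Num.conj M^T.
Definition ip n (u v : 'cV[C]_n) : C := (ad v *m u) 0 0.

Lemma adM m n k (A : 'M[C]_(m,n)) (B : 'M[C]_(n,k)) : ad (A *m B) = ad B *m ad A.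
Proof. by rewrite /ad trmx_mul map_mxM. Qed.
Lemma adK m n (A : 'M[C]_(m,n)) : ad (ad A) = A.
Proof. by apply/matrixP=> i j; rewrite !mxE conjCK. Qed.
Lemma adD m n (A B : 'M[C]_(m,n)) : ad (A + B) = ad A + ad B.
Proof. by apply/matrixP=> i j; rewrite !mxE rmorphD. Qed.
Lemma adN m n (A : 'M[C]_(m,n)) : ad (- A) = - ad A.
Proof. by apply/matrixP=> i j; rewrite !mxE rmorphN. Qed.
Lemma adB m n (A B : 'M[C]_(m,n)) : ad (A - B) = ad A - ad B.
Proof. by rewrite adD adN. Qed.
Lemma adZ m n a (A : 'M[C]_(m,n)) : ad (a *: A) = a^* *: ad A.
Proof. by apply/matrixP=> i j; rewrite !mxE rmorphM. Qed.
Lemma ad_scalar n a : ad (a%:M : 'M[C]_n) = (a^*)%:M.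
Proof. by apply/matrixP=> i j; rewrite !mxE rmorphMn eq_sym. Qed.
Lemma ad1 n : ad (1%:M : 'M[C]_n) = 1%:M.
Proof. by rewrite ad_scalar rmorph1. Qed.

Lemma cM (a b : C) : (a * b)^* = a^* * b^*. Proof. exact: rmorphM. Qed.
Lemma cN (a : C) : (- a)^* = - a^*. Proof. exact: rmorphN. Qed.
Lemma cD (a b : C) : (a + b)^* = a^* + b^*. Proof. exact: rmorphD. Qed.
Lemma cS (I : finType) (F : I -> C) : (\sum_i F i)^* = \sum_i (F i)^*.
Proof. exact: rmorph_sum. Qed.

Lemma ipE n (u v : 'cV[C]_n) : ip u v = \sum_i (v i 0)^* * u i 0.
Proof. by rewrite /ip mxE; apply: eq_bigr => i _; rewrite !mxE. Qed.
Lemma ip_mull n (M : 'M[C]_n) u v : ip (M *m u) v = ip u (ad M *m v).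
Proof. by rewrite /ip adM adK mulmxA. Qed.
Lemma ipDl n (u w v : 'cV[C]_n) : ip (u + w) v = ip u v + ip w v.
Proof. by rewrite /ip mulmxDr mxE. Qed.
Lemma ipDr n (u w v : 'cV[C]_n) : ip v (u + w) = ip v u + ip v w.
Proof. by rewrite /ip adD mulmxDl mxE. Qed.
Lemma ipNl n (u v : 'cV[C]_n) : ip (- u) v = - ip u v.
Proof. by rewrite /ip mulmxN mxE. Qed.
Lemma ipNr n (u v : 'cV[C]_n) : ip v (- u) = - ip v u.
Proof. by rewrite /ip adN mulNmx mxE. Qed.
Lemma ipBl n (u w v : 'cV[C]_n) : ip (u - w) v = ip u v - ip w v.
Proof. by rewrite ipDl ipNl. Qed.
Lemma ipBr n (u w v : 'cV[C]_n) : ip v (u - w) = ip v u - ip v w.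
Proof. by rewrite ipDr ipNr. Qed.
Lemma ipZl n a (u v : 'cV[C]_n) : ip (a *: u) v = a * ip u v.
Proof. by rewrite /ip -scalemxAr mxE. Qed.
Lemma ipZr n a (u v : 'cV[C]_n) : ip v (a *: u) = a^* * ip v u.
Proof. by rewrite /ip adZ -scalemxAl mxE. Qed.
Lemma ipC n (u v : 'cV[C]_n) : ip u v = (ip v u)^*.
Proof.
rewrite !ipE cS; apply: eq_bigr => i _.
by rewrite cM conjCK mulrC.
Qed.
Lemma ip_ge0 n (u : 'cV[C]_n) : 0 <= ip u u.
Proof.
rewrite ipE; apply: sumr_ge0 => i _.
by rewrite mulrC -normCK exprn_ge0.
Qed.
Lemma ip_eq0 n (u : 'cV[C]_n) : ip u u = 0 -> u = 0.
Proof.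
rewrite ipE => h; apply/colP => i; rewrite mxE.
have hi : (u i 0)^* * u i 0 = 0.
  apply: (@psumr_eq0P _ _ predT (fun i => (u i 0)^* * u i 0)) => //.
  by move=> j _; rewrite mulrC -normCK exprn_ge0.
move: hi; rewrite mulrC -normCK => /eqP; rewrite expf_eq0 normr_eq0.
by case/andP=> _ /eqP.
Qed.


Lemma ip0r n (v : 'cV[C]_n) : ip v 0 = 0.
Proof. by rewrite -(scale0r (0:'cV_n)) ipZr rmorph0 mul0r. Qed.

Lemma ip_exp n (a1 b1 a2 b2 : 'cV[C]_n) s :
  ip (a1 - s *: b1) (a2 - s *: b2) =
  ip a1 a2 - s^* * ip a1 b2 - s * ip b1 a2 + s * s^* * ip b1 b2.
Proof.
rewrite ipBl !ipBr !ipZl !ipZr; ring.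
Qed.

Lemma real_conj (x : C) : 0 <= x -> x^* = x.
Proof. by move=> h; apply: conj_Creal; apply: ger0_real. Qed.

Lemma step1 n (P T : 'M[C]_n) (hP : P *m P = P) (hT : ad T = T)
  (hTp : forall v, 0 <= ip (T *m v) v)
  (hGp : forall v, ip (T *m v) v <= ip v v)
  (hH : 2%:R *: (T *m P - P *m T) = ad P *m P - P *m ad P)
  (u : 'cV_n) l (hu : P *m ad P *m u = l *: u) (hl : l != 0) : ad P *m u = u.
Proof.
have hH' : 2%:R *: (ad P *m T - T *m ad P) = ad P *m P - P *m ad P.
  have := congr1 (@ad _ _) hH.
  by rewrite adZ adB !adM hT adB !adM adK rmorph_nat.
have eu : u = l^-1 *: (P *m (ad P *m u) : 'cV_n) by rewrite mulmxA hu scalerA mulVf // scale1r.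
have Pu : P *m u = u.
  by rewrite [in LHS]eu -scalemxAr (mulmxA P P) hP -eu.
set t := u - ad P *m u.
have PPs : ad P *m ad P = ad P by rewrite -adM hP.
have Pst : ad P *m t = 0 by rewrite mulmxBr mulmxA PPs subrr.
have Pt : P *m t = (1 - l) *: u by rewrite mulmxBr Pu mulmxA hu scalerBl scale1r.
have iut : ip u t = 0 by rewrite ipBr -ip_mull Pu subrr.
have itu : ip t u = 0 by rewrite ipC iut rmorph0.
set a := ip u u.
have itt : ip t t = (l - 1) * a.
  by rewrite {2}/t ipBr itu -ip_mull Pt ipZl sub0r -mulNr opprB.
have f3 : 2%:R * ip (T *m u) t = (1 - l)^* * a.
  have := congr1 (fun M => ip (M *m u) t) hH.
  rewrite -scalemxAl ipZl !mulmxBl !ipBl -!mulmxA Pu.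
  rewrite [ip (P *m _) _]ip_mull Pst ip0r subr0 => ->.
  rewrite ip_mull adK Pt ipZr (mulmxA P) hu ipZl iut mulr0 subr0 //.
have f4 : 2%:R * ((1 - l)^* * ip (T *m u) u - ip (T *m u) t + ip (T *m t) t) = (1 - l)^* * a.
  have := congr1 (fun M => ip (M *m u) t) hH'.
  rewrite -scalemxAl ipZl !mulmxBl !ipBl -!mulmxA.
  rewrite [ip (ad P *m (T *m u)) t]ip_mull adK Pt ipZr Pu.
  rewrite [ip (ad P *m u) t]ip_mull adK Pt ipZr -/a.
  rewrite (mulmxA P) hu ipZl iut mulr0 subr0.
  have -> : ad P *m u = u - t by rewrite /t opprB addrC subrK.
  by rewrite mulmxBr ipBl => <-; ring.
set c := (1 - l)^* in f3 f4.
set m := ip (T *m u) u in f4.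
set y := ip (T *m u) t in f3 f4.
set h := ip (T *m t) t in f4.
have two0 : (2%:R : C) != 0 by rewrite pnatr_eq0.
have e2 : c * m - y + h = y.
  by apply: (mulfI two0); rewrite f4 f3.
have hh : h = c * a - c * m.
  have -> : h = (c * m - y + h) + y - c * m by ring.
  by rewrite e2 -f3 mulr_natl mulr2n.
set tau := ip t t in itt.
have tau0 : 0 <= tau by apply: ip_ge0.
have [/eqP tz|tnz] := boolP (tau == 0).
  have := ip_eq0 tz; rewrite /t => /eqP; rewrite subr_eq0 => /eqP <- //.
have a0 : 0 <= a by apply: ip_ge0.
have anz : a != 0 by apply: contraNneq tnz => az; rewrite itt az mulr0.
have apos : 0 < a by rewrite lt_def anz.
have taupos : 0 < tau by rewrite lt_def tnz.
set nu := l - 1 in itt.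
have enu : nu = tau / a by rewrite itt mulfK.
have nupos : 0 < nu by rewrite enu divr_gt0.
have cnu : c = - nu.
  by rewrite /c -opprB -/nu cN real_conj // ltW.
have h0 : 0 <= h by apply: hTp.
have am0 : 0 <= a - m by rewrite subr_ge0; apply: hGp.
have ma : m = a.
  have : nu * (a - m) <= 0.
    by rewrite -oppr_ge0 -mulNr -cnu mulrBr -hh.
  rewrite pmulr_rle0 // => am.
  by apply/eqP; rewrite eq_sym -subr_eq0 eq_le am am0.
have ey : y = - (tau / 2%:R).
  by apply: (mulfI two0); rewrite f3 cnu mulNr -itt; field.
set g := tau - h.
have g0 : 0 <= g by rewrite subr_ge0; apply: hGp.
have g1 : g + 1 != 0 by rewrite gt_eqF // ltr_wpDl.
set s := tau / (g + 1).
have s0 : 0 <= s by rewrite divr_ge0 // addr_ge0.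
have cs : s^* = s by apply: real_conj.
have cy : y^* = y.
  by rewrite ey cN real_conj // divr_ge0 // ler0n.
have key := hGp (u - s *: t).
rewrite mulmxBr -scalemxAr ip_exp ip_exp in key.
have Ttu : ip (T *m t) u = y^* by rewrite ip_mull hT ipC.
rewrite Ttu cy cs iut itu -/a -/tau -/m -/y -/h in key.
move: key; rewrite -subr_ge0.
have -> : a - s * 0 - s * 0 + s * s * tau - (m - s * y - s * y + s * s * h) = 
  - (tau ^+ 2 / (g + 1) ^+ 2).
  rewrite ma ey /s /g; field; done.
rewrite oppr_ge0 => hle.
have : 0 < tau ^+ 2 / (g + 1) ^+ 2.
  by rewrite divr_gt0 // exprn_gt0 // ltr_wpDl.
by move=> /lt_geF; rewrite hle.
Qed.

Lemma mx_col_eq m n (A B : 'M[C]_(m,n)) :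
  (forall j, A *m (delta_mx j 0 : 'cV_n) = B *m (delta_mx j 0 : 'cV_n)) -> A = B.
Proof.
move=> h; apply/matrixP => i j.
have := congr1 (fun M : 'cV_m => M i 0) (h j).
by rewrite -!colE !mxE.
Qed.

Lemma adW0 n (W : 'M[C]_n) : ad W *m W = 0 -> W = 0.
Proof.
move=> h; apply: mx_col_eq => j; rewrite mul0mx.
apply: ip_eq0; rewrite ip_mull mulmxA h mul0mx.
exact: ip0r.
Qed.

Lemma ML n (P T : 'M[C]_n) (hP : P *m P = P) (hT : ad T = T)
  (hTp : forall v, 0 <= ip (T *m v) v)
  (hGp : forall v, ip (T *m v) v <= ip v v)
  (hH : 2%:R *: (T *m P - P *m T) = ad P *m P - P *m ad P) : ad P = P.
Proof.
set K := P *m ad P.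
have hK : ad K = K by rewrite adM adK.
have Knorm : K \is normalmx.
  by rewrite qualifE; change (K *m ad K == ad K *m K); rewrite hK.
have /orthomx_spectralP eK := Knorm.
set U := spectralmx K in eK; set d := spectral_diag K in eK.
have Uu : U \in unitmx by apply: spectral_unit.
have KV : K *m invmx U = invmx U *m diag_mx d.
  by rewrite {1}eK -!mulmxA mulmxV // mulmx1.
have main : ad P *m K *m invmx U = K *m invmx U.
  apply: mx_col_eq => j.
  set v := invmx U *m (delta_mx j 0 : 'cV_n).
  have Kv : K *m v = d 0 j *: v.
    have De : diag_mx d *m (delta_mx j 0 : 'cV_n) = d 0 j *: delta_mx j 0.
      apply/colP => i; rewrite mul_diag_mx !mxE.
      have [->|ij] := eqVneq i j; first by rewrite eqxx.
      by rewrite !mulr0.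
    by rewrite /v mulmxA KV -mulmxA De scalemxAr.
  have -> : ad P *m K *m invmx U *m delta_mx j 0 = ad P *m (K *m v) by rewrite /v !mulmxA.
  have -> : K *m invmx U *m delta_mx j 0 = K *m v by rewrite /v !mulmxA.
  rewrite Kv.
  have [dz|dnz] := eqVneq (d 0 j) 0.
    by rewrite dz scale0r mulmx0.
  rewrite -scalemxAr (step1 hP hT hTp hGp hH _ dnz) //.
have PK : ad P *m K = K.
  by rewrite -(mulmxKV Uu (ad P *m K)) main mulmxKV.
pose W := ad P *m (1%:M - P).
have WW : ad W *m W = 0.
  rewrite /W adM adK adB ad1 !mulmxA mulmxBl mul1mx.
  by rewrite mulmxBl -(mulmxA (ad P) P (ad P)) -/K PK subrr mul0mx.
have /adW0 W0 := WW.
have e1 : ad P = ad P *m P.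
  by apply/eqP; rewrite -subr_eq0 -{1}(mulmx1 (ad P)) -mulmxBr -/W W0.
have e2 : P = ad P *m P.
  by have := congr1 (@ad _ _) e1; rewrite adK adM adK.
by rewrite e1 -e2.
Qed.

Lemma ip_deltar n (u : 'cV[C]_n) i : ip u (delta_mx i 0) = u i 0.
Proof.
rewrite ipE (bigD1 i) //= big1 ?addr0.
  by rewrite !mxE !eqxx /= conjC1 mul1r.
by move=> k ki; rewrite !mxE (negPf ki) /= conjC0 mul0r.
Qed.

Lemma form0_mx n (N : 'M[C]_n) : (forall v, ip (N *m v) v = 0) -> N = 0.
Proof.
move=> h.
have gen : forall u w, ip (N *m u) w = 0.
  move=> u w.
  have e1 := h (u + w); rewrite mulmxDr ipDl !ipDr !h in e1.
  have e2 := h (u + 'i *: w).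
  rewrite mulmxDr -scalemxAr ipDl !ipDr !ipZl !ipZr !h conjCi in e2.
  set a := ip (N *m u) w in e1 e2; set b := ip (N *m w) u in e1 e2.
  have : (- 2%:R * 'i) * a = 0.
    have -> : (- 2%:R * 'i) * a =
      (0 + - 'i * a + ('i * b + 'i * (- 'i * 0))) - 'i * (0 + a + (b + 0)) by ring.
    by rewrite e1 e2 mulr0 subr0.
  move/eqP; rewrite !mulf_eq0 oppr_eq0 pnatr_eq0 (negPf (neq0Ci C)) /=.
  by move/eqP.
apply: mx_col_eq => j; rewrite mul0mx; apply/colP => i.
by rewrite -ip_deltar gen mxE.
Qed.

Lemma herm_of_real n (M : 'M[C]_n) : (forall v, ip (M *m v) v \is Num.real) -> ad M = M.
Proof.
move=> hr; apply/eqP; rewrite eq_sym -subr_eq0; apply/eqP/form0_mx => v.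
by rewrite mulmxBl ipBl [ip (ad M *m v) v]ip_mull adK [ip v (M *m v)]ipC (conj_Creal (hr v)) subrr.
Qed.

End ML.

Section Analytic.
Variable R : realType.
Local Notation C := R[i].

Lemma cmodC (z : C) : ((cmod z)%:C)%C = `|z|.
Proof.
rewrite /cmod; move: (`|z|) (normr_ge0 z) => w /ger0_Im.
by case: w => a b /= ->.
Qed.

Lemma cmod_ge0 (z : C) : 0 <= cmod z.
Proof. by move: (normr_ge0 z); rewrite -cmodC lecE => /andP[_]. Qed.

Lemma cmodE (z : C) : cmod z = Num.sqrt (complex.Re z ^+ 2 + complex.Im z ^+ 2).
Proof. by rewrite /cmod normc_def. Qed.

Lemma cmod_le (a : C) (b : R) : (cmod a <= b) = (`|a| <= (b%:C)%C).
Proof. by rewrite -cmodC lecR. Qed.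

Lemma vnormE n (v : 'cV[C]_n) : ((vnorm v ^+ 2)%:C)%C = ip v v /\ 0 <= vnorm v.
Proof.
split; last by rewrite /vnorm sqrtr_ge0.
rewrite /vnorm sqr_sqrtr; last by apply: sumr_ge0 => i _; rewrite exprn_ge0 // cmod_ge0.
rewrite rmorph_sum ipE; apply: eq_bigr => i _.
by rewrite rmorphXn /= cmodC normCK mulrC.
Qed.

Lemma opnorm_ub n (M : 'M[C]_n) v : vnorm v <= 1 -> vnorm (M *m v) <= opnorm M.
Proof.
move=> hv; rewrite /opnorm; apply: ub_le_sup; last by exists v.
exists (Num.sqrt (\sum_i (\sum_j cmod (M i j)) ^+ 2)) => _ [w hw <-].
rewrite /vnorm ler_sqrt; last by apply: sumr_ge0 => i _; rewrite exprn_ge0 // sumr_ge0 // => j _; apply: cmod_ge0.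
apply: ler_sum => i _.
have s0 : 0 <= \sum_j cmod (M i j) by apply: sumr_ge0 => j _; apply: cmod_ge0.
rewrite ler_pXn2r // ?nnegrE ?cmod_ge0 //.
have each : forall j, cmod (w j 0) <= 1.
  move=> j; rewrite -(@expr_le1 _ 2) // ?cmod_ge0 //.
  have w0 : 0 <= vnorm w by rewrite /vnorm sqrtr_ge0.
  have hw2 : vnorm w ^+ 2 <= 1 by rewrite expr_le1.
  apply: le_trans hw2.
  rewrite /vnorm sqr_sqrtr; last by apply: sumr_ge0 => k _; rewrite exprn_ge0 // cmod_ge0.
  by rewrite (bigD1 j) //= lerDl sumr_ge0 // => k _; rewrite exprn_ge0 // cmod_ge0.
rewrite cmod_le mxE rmorph_sum /=.
apply: le_trans (ler_norm_sum _ _ _) _.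
apply: ler_sum => j _; rewrite cmodC normrM.
apply: ler_piMr; first exact: normr_ge0.
by rewrite -cmodC -[1]/((1%:C)%C) lecR.
Qed.


Lemma supnorm_le (X : Type) (f : X -> C) (B : R) :
  0 <= B -> (forall x, cmod (f x) <= B) -> supnorm f <= B.
Proof.
move=> B0 hf; rewrite /supnorm.
have [[x0 _]|ne] := pselect (exists x : X, True).
  apply: ge_sup; first by exists (cmod (f x0)), x0.
  by move=> _ [x _ <-].
have -> : range (fun x => cmod (f x)) = set0.
  by apply/seteqP; split => // y [x _ _]; apply: ne; exists x.
by rewrite sup0.
Qed.

Lemma S1 n (T : 'M[C]_n)
  (Hc : forall (c : C) (B : R), 0 <= B -> cmod c <= B -> cmod (c + 1) <= B ->
     opnorm (c%:M + T) <= B) (v : 'cV[C]_n) (hv : ip v v = 1)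
  (c : C) (B : R) (hB : 0 <= B) (h1 : cmod c <= B) (h2 : cmod (c + 1) <= B) :
  c * c^* + c * (ip (T *m v) v)^* + c^* * ip (T *m v) v + ip (T *m v) (T *m v)
    <= ((B ^+ 2)%:C)%C.
Proof.
have [nv nv0] := vnormE v.
have nv1 : vnorm v <= 1.
  rewrite -(@expr_le1 _ 2) //; move: nv; rewrite hv => /complexI ->.
  by [].
have hw := le_trans (opnorm_ub (c%:M + T) nv1) (Hc c B hB h1 h2).
have [nw nw0] := vnormE ((c%:M + T) *m v).
have : ip ((c%:M + T) *m v) ((c%:M + T) *m v) <= ((B ^+ 2)%:C)%C.
  by rewrite -nw lecR ler_pXn2r // nnegrE.
rewrite mulmxDl mul_scalar_mx ipDl !ipDr !ipZl !ipZr hv [ip v (T *m v)]ipC.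
by rewrite mulr1 !addrA.
Qed.


Lemma cplx_key (z w : C) : 0 <= w ->
  (forall (c : C) (B : R), 0 <= B -> cmod c <= B -> cmod (c + 1) <= B ->
     c * c^* + c * z^* + c^* * z + w <= ((B ^+ 2)%:C)%C) -> 0 <= z /\ z <= 1.
Proof.
case: z => x y; case: w => r q w0 H.
move: w0; rewrite lecE /= => /andP [/eqP q0 r0].
have F1 : forall s : R, 2 * s * y <= x - r.
  move=> s.
  have := H ((- (1/2)) +i* s)%C (Num.sqrt ((1/2)^+2 + s^+2)).
  have e : - (1 / 2) + 1 = 1 / 2 :> R by field.
  have p0 : 0 <= (1 / 2) ^+ 2 + s ^+ 2 :> R by rewrite addr_ge0 // sqr_ge0.
  rewrite sqrtr_ge0 !cmodE /= sqrrN e addr0 lexx sqr_sqrtr //.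
  move=> /(_ isT isT isT); rewrite lecE => /andP[_].
  rewrite q0; simpc => /= h.
  nra.
have y0 : y = 0.
  apply/eqP/negPn/negP => yn.
  have := F1 ((x - r + 1) / (2 * y)).
  have -> : 2 * ((x - r + 1) / (2 * y)) * y = x - r + 1 by field; rewrite yn.
  lra.
have x0 : 0 <= x - r by have := F1 0; rewrite mulr0 mul0r.
have F2 : forall K : R, 0 <= K -> 2 * K * x <= 2 * K + 1.
  move=> K K0.
  have := H (K%:C)%C (K + 1).
  have K1 : 0 <= K + 1 by rewrite addr_ge0.
  rewrite K1 !cmodE /= expr0n addr0 addr0 expr0n addr0 !sqrtr_sqr !ger0_norm //.
  rewrite lerDl ler01 lexx.
  move=> /(_ isT isT isT); rewrite lecE => /andP[_].
  rewrite q0 y0; simpc => /= h.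
  nra.
have x1 : x <= 1.
  rewrite leNgt; apply/negP => x1.
  have K0 : 0 <= 1 / (x - 1) by rewrite divr_ge0 // subr_ge0 ltW.
  have := F2 _ K0.
  have -> : 2 * (1 / (x - 1)) * x = 2 * (1 / (x - 1)) + 2.
    by field; rewrite subr_eq0 gt_eqF.
  lra.
by rewrite !lecE /= y0 eqxx /=; split; lra.
Qed.

Lemma core n (T : 'M[C]_n)
  (Hc : forall (c : C) (B : R), 0 <= B -> cmod c <= B -> cmod (c + 1) <= B ->
     opnorm (c%:M + T) <= B) (v : 'cV[C]_n) :
  0 <= ip (T *m v) v /\ ip (T *m v) v <= ip v v.
Proof.
have [nv nv0] := vnormE v.
set r := vnorm v in nv nv0.
have [r0|rp] := eqVneq r 0.
  have v0 : v = 0 by apply: ip_eq0; rewrite -nv r0 expr0n.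
  by rewrite v0 mulmx0 ip0r; split => //; exact: ip_ge0.
have rpos : 0 < r by rewrite lt_def rp nv0.
set k : C := ((r^-1)%:C)%C.
set v' := k *: v.
have ck : k^* = k by exact: conjc_real.
have e1 : r^-1 * (r^-1 * r ^+ 2) = 1 by field.
have e2 : r ^+ 2 / r / r = 1 by field.
have hv' : ip v' v' = 1.
  by rewrite /v' ipZl ipZr ck -nv /k -!rmorphM /= e1.
have [h1 h2] := cplx_key (ip_ge0 (T *m v')) (S1 Hc hv').
have ez : ip (T *m v) v = ((r ^+ 2)%:C)%C * ip (T *m v') v'.
  by rewrite /v' -scalemxAr ipZl ipZr ck !mulrA /k -!rmorphM /= e2 mul1r.
have r20 : 0 <= ((r ^+ 2)%:C)%C :> C by rewrite ler0c sqr_ge0.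
rewrite ez -nv; split; first by rewrite mulr_ge0.
by rewrite -{2}(mulr1 ((r ^+ 2)%:C)%C); apply: ler_wpM2l.
Qed.

End Analytic.

Lemma zmod_aux (V : zmodType) (x y z w : V) :
  x + (y + z - x) - (x + (w + z - x)) = y - w.
Proof.
rewrite [x + (y + z - x)]addrC subrK [x + (w + z - x)]addrC subrK.
by rewrite opprD addrACA subrr addr0.
Qed.

Theorem theorem5p1 (R : realType) (X : topologicalType)
  (hXc : compact [set: X]) (hXh : hausdorff_space X)
  (A : set (X -> R[i])) (hA : uniform_algebra A)
  (n : nat) (theta : (X -> R[i]) -> 'M[R[i]]_n) (htheta : cont_unital_hom A theta)
  (alpha : (X -> R[i]) -> (X -> R[i])) (halpha : unital_antilinear_contraction A alpha)
  (hnorm : forall f, A f -> opnorm (theta_alpha theta alpha f) <= supnorm f)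
  (p : X -> R[i]) (hp : A p)
  (hp2 : (fun x => p x * p x) = p) (hpconj : (fun x => Num.conj (p x)) = p) :
  theta p *m theta p = theta p /\ adjmx (theta p) = theta p.
Proof.
case: hA => hAC [hconst hadd hscal hmul hclosed].
case: htheta => hlin hmulT h1 hcont.
case: halpha => hAa hlinA ha1 hcontr.
set P := theta p.
have hP : P *m P = P by rewrite /P -hmulT // hp2.
split => //.
set Q := theta (alpha p).
have hAap := hAa p hp.
set T := theta_alpha theta alpha p.
have eT : T = 2%:R^-1 *: (P + ad Q) by [].
have Hc : forall (c : R[i]) (B : R), 0 <= B -> cmod c <= B -> cmod (c + 1) <= B ->
    opnorm (c%:M + T) <= B.
  move=> c B hB hc1 hc2.
  pose f := fun x => c * (fun _ : X => (1 : R[i])) x + p x.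
  have Af : A f by apply: hadd; [apply: hscal; apply: hconst | exact: hp].
  have eTf : theta_alpha theta alpha f = c%:M + T.
    rewrite /theta_alpha /f (hlinA c (fun _ => 1) p (hconst 1) hp) ha1.
    rewrite (hlin (c^*) (fun _ => 1) (alpha p) (hconst 1) hAap).
    rewrite (hlin c (fun _ => 1) p (hconst 1) hp) h1 -/P -/Q eT.
    change (2%:R^-1 *: (c *: 1%:M + P + ad ((c^*) *: 1%:M + Q)) =
      c%:M + 2%:R^-1 *: (P + ad Q)).
    rewrite adD adZ conjCK ad1 scalemx1.
    apply/matrixP => i j; rewrite !mxE.
    by case: (i == j) => /=; rewrite ?mulr1n ?mulr0n; field.
  rewrite -eTf; apply: le_trans (hnorm _ Af) _.
  apply: supnorm_le => // x; rewrite /f /=.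
  have hx : p x * p x = p x := congr1 (fun g => g x) hp2.
  have : p x * (p x - 1) = 0 by rewrite mulrBr mulr1 hx subrr.
  move/eqP; rewrite mulf_eq0 subr_eq0 => /orP[/eqP->|/eqP->].
    by rewrite mulr1 addr0.
  by rewrite mulr1.
have hTp : forall v, 0 <= ip (T *m v) v by move=> v; case: (core Hc v).
have hGp : forall v, ip (T *m v) v <= ip v v by move=> v; case: (core Hc v).
have hT : ad T = T.
  by apply: herm_of_real => v; apply: ger0_real; exact: hTp.
have QP : Q *m P = P *m Q.
  rewrite /P /Q -!hmulT //; congr theta; apply: funext => x; exact: mulrC.
have two0 : (2%:R : R[i]) != 0 by rewrite pnatr_eq0.
have eD : ad Q = ad P + Q - P.
  have h2 := hT; rewrite {1}eT adZ adD adK in h2.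
  have c2 : (2%:R^-1 : R[i])^* = 2%:R^-1 by apply: conj_Creal; rewrite realV realn.
  rewrite c2 eT in h2.
  have := congr1 (fun M => 2%:R *: M) h2; rewrite !scalerA mulfV // !scale1r => ->.
  by rewrite addrC addKr.
have hH : 2%:R *: (T *m P - P *m T) = ad P *m P - P *m ad P.
  rewrite eT -scalemxAl -scalemxAr -scalerBr scalerA mulfV // scale1r.
  rewrite eD !mulmxDl !mulmxDr !mulNmx !mulmxN hP QP.
  exact: zmod_aux.
change (ad P = P).
exact: ML hP hT hTp hGp hH.
Qed.
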